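(* Let $n=2$ and let $\mathcal M_1=\begin{pmatrix}\frac12&\frac12\\ \frac12&\frac12\end{pmatrix}$ and $\mathcal M_2=\begin{pmatrix}\frac{9}{10}&\frac{1}{10}\\ \frac1{10}&\frac9{10}\end{pmatrix}$. Then (i) there is a directed $3$-regular multigraph on $[2]$ whose throughput with respect to $\mathcal M_1$ is at least $\frac89$, but no directed $3$-regular multigraph on $[2]$ has weak direct throughput with respect to $\mathcal M_1$ greater than $\frac56$; and (ii) there is a directed $3$-regular multigraph on $[2]$ whose weak direct throughput with respect to $\mathcal M_2$ is at least $\frac9{10}$, but no directed $3$-regular multigraph on $[2]$ has throughput with respect to $\mathcal M_2$ at least $\frac9{10}$.
   Context: Let $n\ge 1$ and $[n]=\{1,\dots,n\}$. Networks are finite directed multigraphs on vertex set $[n]$; self-loops and parallel arcs are allowed. A directed multigraph is directed $r$-regular if every vertex has exactly $r$ outgoing and exactly $r$ incoming arcs (a self-loop at $v$ counts as one outgoing and one incoming arc of $v$). A path is a non-empty sequence of arcs $((u_1,v_1),\dots,(u_\ell,v_\ell))$ with $v_i=u_{i+1}$ for $i<\ell$; it goes from $u_1$ to $v_\ell$ and has length $\ell\ge 1$. An $n\times n$ matrix is doubly stochastic if all entries are nonnegative and every row and every column sums to $1$. In a directed $(2n-1)$-regular multigraph $G$ on $[n]$ every arc has capacity $\frac{1}{2n-1}$. $G$ hosts a nonnegative $n\times n$ matrix $\mathcal M=(a_{i,j})$ if there is a finite collection $\{(P_k,d_k)\}$, where each $P_k$ is a path in $G$ from some $s_k$ to some $t_k$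 and $d_k\ge 0$, such that $\sum_{k:\,s_k=u,\,t_k=v} d_k=a_{u,v}$ for all $u,v\in[n]$, and for every arc $e$ of $G$ (parallel arcs are distinct) $\sum_{k:\,e\in P_k} d_k\le \frac{1}{2n-1}$. $G$ directly hosts $\mathcal M$ if this is possible with all paths $P_k$ of length $1$. For doubly stochastic $\mathcal M=(a_{i,j})$: the throughput of $G$ is the largest $\theta$ such that $G$ hosts $\theta\mathcal M$; the weak direct throughput of $G$ is the largest $\eta$ such that $G$ directly hosts some matrix $\mathcal M'=(a'_{i,j})$ with $0\le a'_{i,j}\le a_{i,j}$ for all $i,j$ and $\sum_{i,j}a'_{i,j}=\eta n$. *)

(* Defs.v *)
From HB Require Import structures.
From mathcomp Require Import all_boot all_order all_algebra.
From mathcomp Require Import classical_sets reals.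
Unset Printing Implicit Defensive.
Import Order.TTheory GRing.Theory Num.Theory.
Local Open Scope ring_scope.

(* A directed multigraph on [n] (vertices 'I_n) is a finite list of arcs
   (u, v); parallel arcs are distinct list positions, self-loops allowed. *)
Definition multigraph (n : nat) := seq ('I_n * 'I_n).

Definition dregular {n} (G : multigraph n) (r : nat) : Prop :=
  forall v : 'I_n, count (fun a => a.1 == v) G = r /\ count (fun a => a.2 == v) G = r.

Definition arc {n} (G : multigraph n) (e : 'I_(size G)) : 'I_n * 'I_n :=
  tnth (in_tuple G) e.

Definition is_path {n} (G : multigraph n) (e0 : 'I_(size G)) (es : seq 'I_(size G)) : bool :=
  path (fun e f => (arc G e).2 == (arc G f).1) e0 es.
Definition path_src {n} (G : multigraph n) (e0 : 'I_(size G)) (es : seq 'I_(size G)) :=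
  (arc G e0).1.
Definition path_tgt {n} (G : multigraph n) (e0 : 'I_(size G)) (es : seq 'I_(size G)) :=
  (arc G (last e0 es)).2.

(* capacity of each arc in a (2n-1)-regular multigraph *)
Definition capacity (R : realType) (n : nat) : R := ((2 * n - 1)%N%:R)^-1.

(* a routing: finite collection of (path, demand) pairs; a path is (e0, es) *)
Definition routing_ok {R : realType} {n} (G : multigraph n)
    (F : seq (('I_(size G) * seq 'I_(size G)) * R)) (A : 'M[R]_n) : Prop :=
  [/\ forall f, f \in F -> is_path G f.1.1 f.1.2,
      forall f, f \in F -> 0 <= f.2,
      forall u v : 'I_n,
        \sum_(f <- F | (path_src G f.1.1 f.1.2 == u) && (path_tgt G f.1.1 f.1.2 == v)) f.2
        = A u v &
      forall e : 'I_(size G),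
        \sum_(f <- F | e \in f.1.1 :: f.1.2) f.2 <= capacity R n].

Definition hosts {R : realType} {n} (G : multigraph n) (A : 'M[R]_n) : Prop :=
  exists F, routing_ok G F A.

Definition directly_hosts {R : realType} {n} (G : multigraph n) (A : 'M[R]_n) : Prop :=
  exists F, routing_ok G F A /\ (forall f, f \in F -> f.1.2 = [::]).

Definition throughput {R : realType} {n} (G : multigraph n) (M : 'M[R]_n) : R :=
  sup [set theta : R | hosts G (theta *: M)].

Definition weak_direct_throughput {R : realType} {n} (G : multigraph n) (M : 'M[R]_n) : R :=
  sup [set eta : R | exists M' : 'M[R]_n,
         (forall i j, 0 <= M' i j <= M i j) /\
         \sum_(i < n) \sum_(j < n) M' i j = eta * n%:R /\
         directly_hosts G M'].

Definition M1 (R : realType) : 'M[R]_2 := \matrix_(i, j) (1 / 2).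
Definition M2 (R : realType) : 'M[R]_2 :=
  \matrix_(i, j) (if i == j then 9 / 10 else 1 / 10).

(* Main.v *)
Require Import Defs.
From HB Require Import structures.
From mathcomp Require Import all_boot all_order all_algebra.
From mathcomp Require Import classical_sets reals.
From mathcomp Require Import ring lra zify.
Import Order.TTheory GRing.Theory Num.Theory.
Local Open Scope ring_scope.

Notation o0 := (@ord0 1).
Notation o1 := (@ord_max 1).

Lemma ord2E (i : 'I_2) : i = o0 \/ i = o1.
Proof. case: i => [[|[|k]] Hk]; [left|right|]; try exact: val_inj; by []. Qed.

Lemma o01 : (o0 == o1) = false. Proof. by []. Qed.
Lemma o10 : (o1 == o0) = false. Proof. by []. Qed.

Lemma sum2 (R : realType) (F : 'I_2 -> R) : \sum_i F i = F o0 + F o1.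
Proof.
rewrite big_ord_recr big_ord_recr big_ord0 /= add0r.
by congr (F _ + F _); apply: val_inj.
Qed.

Lemma cap2 (R : realType) : capacity R 2 = 1 / 3.
Proof. by rewrite /capacity div1r. Qed.

Lemma pair2E (p : 'I_2 * 'I_2) :
  [\/ p = (o0, o0), p = (o0, o1), p = (o1, o0) | p = (o1, o1)].
Proof.
case: p => a b; case: (ord2E a) => ->; case: (ord2E b) => ->.
by constructor 1. by constructor 2. by constructor 3. by constructor 4.
Qed.

Definition cnt (G : multigraph 2) (p : 'I_2 * 'I_2) := count (pred1 p) G.

Lemma sumG (R : realType) (G : multigraph 2) (phi : 'I_2 * 'I_2 -> R) :
  \sum_(x <- G) phi x = (cnt G (o0,o0))%:R * phi (o0,o0) + (cnt G (o0,o1))%:R * phi (o0,o1)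
     + (cnt G (o1,o0))%:R * phi (o1,o0) + (cnt G (o1,o1))%:R * phi (o1,o1).
Proof.
rewrite /cnt; elim: G => [|x G IH]; first by rewrite big_nil /= !mul0r !addr0.
rewrite big_cons IH /=.
case: (pair2E x) => ->; rewrite /= ?o01 ?o10 /= !natrD; ring.
Qed.

Lemma cntE (G : multigraph 2) (v : 'I_2) :
  count (fun a => a.1 == v) G = (cnt G (v, o0) + cnt G (v, o1))%N /\
  count (fun a => a.2 == v) G = (cnt G (o0, v) + cnt G (o1, v))%N.
Proof.
rewrite /cnt; elim: G => [|x G [IH1 IH2]] //=; rewrite IH1 IH2.
case: (ord2E v) => ->; case: (pair2E x) => -> /=; rewrite ?o01 ?o10 /=; lia.
Qed.

Lemma reg_counts (G : multigraph 2) : dregular G 3 ->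
  [/\ (cnt G (o0,o0) + cnt G (o0,o1) = 3)%N, (cnt G (o1,o0) + cnt G (o1,o1) = 3)%N,
      (cnt G (o0,o0) + cnt G (o1,o0) = 3)%N & (cnt G (o0,o1) + cnt G (o1,o1) = 3)%N].
Proof.
move=> H; case: (H o0) => A B; case: (H o1) => C D.
case: (cntE G o0) => A' B'; case: (cntE G o1) => C' D'.
split; congruence.
Qed.
Lemma sum_pair (R : realType) n (a b : 'I_n) (x : R) :
  \sum_u \sum_v (if (a == u) && (b == v) then x else 0) = x.
Proof.
transitivity (\sum_u (if a == u then x else 0)).
  apply: eq_bigr => u _; case: (a == u) => /=; last by rewrite big1.
  rewrite (bigD1 b) //= eqxx big1 ?addr0 // => v Hv.
  by have -> : (b == v) = false by apply/negbTE; rewrite eq_sym.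
rewrite (bigD1 a) //= eqxx big1 ?addr0 // => u Hu.
by have -> : (a == u) = false by apply/negbTE; rewrite eq_sym.
Qed.

Lemma route_bound (R : realType) n (G : multigraph n) F (A : 'M[R]_n)
  (c : 'I_(size G) -> R) (h : 'I_n -> 'I_n -> R) :
  routing_ok G F A -> (forall e, 0 <= c e) ->
  (forall f, f \in F -> h (path_src G f.1.1 f.1.2) (path_tgt G f.1.1 f.1.2)
       <= \sum_(e | e \in f.1.1 :: f.1.2) c e) ->
  \sum_u \sum_v h u v * A u v <= capacity R n * \sum_e c e.
Proof.
case=> _ Hpos Hsum Hcap Hc Hh.
have E1 : \sum_u \sum_v h u v * A u v =
   \sum_(f <- F) f.2 * h (path_src G f.1.1 f.1.2) (path_tgt G f.1.1 f.1.2).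
  transitivity (\sum_u \sum_v \sum_(f <- F)
     (if (path_src G f.1.1 f.1.2 == u) && (path_tgt G f.1.1 f.1.2 == v)
      then f.2 * h (path_src G f.1.1 f.1.2) (path_tgt G f.1.1 f.1.2) else 0)).
    apply: eq_bigr => u _; apply: eq_bigr => v _.
    rewrite -Hsum mulr_sumr big_mkcond /=; apply: eq_bigr => f _.
    by case: ifP => // /andP[/eqP -> /eqP ->]; rewrite mulrC.
  transitivity (\sum_(f <- F) \sum_u \sum_v
     (if (path_src G f.1.1 f.1.2 == u) && (path_tgt G f.1.1 f.1.2 == v)
      then f.2 * h (path_src G f.1.1 f.1.2) (path_tgt G f.1.1 f.1.2) else 0)).
    rewrite [RHS]exchange_big /=; apply: eq_bigr => u _.
    by rewrite exchange_big.
  by apply: eq_bigr => f _; rewrite sum_pair.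
rewrite E1.
apply: (@le_trans _ _ (\sum_(f <- F) f.2 * \sum_(e | e \in f.1.1 :: f.1.2) c e)).
  rewrite big_seq [X in _ <= X]big_seq; apply: ler_sum => f Hf.
  by apply: ler_wpM2l; [exact: Hpos | exact: Hh].
have E2 : \sum_(f <- F) f.2 * \sum_(e | e \in f.1.1 :: f.1.2) c e =
   \sum_e c e * \sum_(f <- F | e \in f.1.1 :: f.1.2) f.2.
  transitivity (\sum_(f <- F) \sum_e (if e \in f.1.1 :: f.1.2 then f.2 * c e else 0)).
    by apply: eq_bigr => f _; rewrite mulr_sumr big_mkcond.
  rewrite exchange_big /=; apply: eq_bigr => e _.
  rewrite mulr_sumr [RHS]big_mkcond /=; apply: eq_bigr => f _.
  by case: ifP => _; rewrite ?mulr0 // mulrC.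
rewrite E2 mulr_sumr; apply: ler_sum => e _.
by rewrite mulrC; apply: ler_wpM2r; [exact: Hc | exact: Hcap].
Qed.

Lemma other2 (x : 'I_2) (p : 'I_2 * 'I_2) :
  p.1 = x -> p <> (x, if x == o0 then o1 else o0) -> p.2 = x.
Proof.
case: (pair2E p) => -> /= <-; rewrite ?o01 ?o10 ?eqxx //= => H; exfalso; exact: H.
Qed.

Lemma path_stay (G : multigraph 2) e0 es (x : 'I_2) :
  is_path G e0 es -> (Defs.arc G e0).1 = x ->
  (forall e : 'I_(size G), e \in e0 :: es -> (Defs.arc G e).1 = x -> (Defs.arc G e).2 = x) ->
  path_tgt G e0 es = x.
Proof.
elim: es e0 => [|e1 es IH] e0 /=.
  by move=> _ H1 H; rewrite /path_tgt /=; apply: H; rewrite ?mem_head.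
rewrite /is_path /= => /andP[/eqP H01 Hp] H1 H.
rewrite /path_tgt /=.
have := IH e1 Hp; rewrite /path_tgt; apply.
  by rewrite -H01; apply: H; rewrite ?mem_head.
by move=> e He; apply: H; rewrite in_cons He orbT.
Qed.

Lemma path_cross (G : multigraph 2) e0 es :
  is_path G e0 es -> path_src G e0 es <> path_tgt G e0 es ->
  exists2 e : 'I_(size G), e \in e0 :: es & Defs.arc G e = (path_src G e0 es, path_tgt G e0 es).
Proof.
move=> Hp Hne.
have Ht : path_tgt G e0 es =
   (if path_src G e0 es == o0 then o1 else o0).
  move: Hne; case: (ord2E (path_src G e0 es)) => ->;
    case: (ord2E (path_tgt G e0 es)) => -> //.
case: (boolP (has (fun e => Defs.arc G e == (path_src G e0 es, path_tgt G e0 es)) (e0 :: es))).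
  by move=> /hasP [e He /eqP]; exists e.
move=> /hasPn H; exfalso; apply: Hne; symmetry.
apply: path_stay => // e He H1; apply: other2 => // Heq.
by move: (H e He); rewrite Heq -Ht eqxx.
Qed.

Lemma path_loop (G : multigraph 2) e0 es :
  is_path G e0 es -> path_src G e0 es = path_tgt G e0 es ->
  (Defs.arc G e0).1 = (Defs.arc G e0).2 \/
  exists e e' : 'I_(size G), [/\ e \in e0 :: es, e' \in e0 :: es,
     Defs.arc G e = (o0, o1) & Defs.arc G e' = (o1, o0)].
Proof.
move=> Hp Hst.
case: (boolP ((Defs.arc G e0).1 == (Defs.arc G e0).2)) => [/eqP|Hne]; first by left.
right.
set s := (Defs.arc G e0).1; set y := (Defs.arc G e0).2.
have Hy : y = (if s == o0 then o1 else o0).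
  move: Hne; rewrite -/s -/y; case: (ord2E s) => ->; case: (ord2E y) => -> //.
have He0 : Defs.arc G e0 = (s, y) by rewrite /s /y; case: (Defs.arc G e0).
have [e' He' Hae'] : exists2 e' : 'I_(size G), e' \in e0 :: es & Defs.arc G e' = (y, s).
  case: es Hp Hst => [|e1 es] Hp Hst.
    by exfalso; move: Hst Hne; rewrite /path_src /path_tgt /= -/s -/y => ->; rewrite eqxx.
  move: Hp; rewrite /is_path /= => /andP[/eqP H01 Hp].
  have Hs1 : path_src G e1 es = y by rewrite /path_src -H01.
  have Ht1 : path_tgt G e1 es = s.
    by move: Hst; rewrite /path_src /path_tgt /= => Hst; rewrite -Hst.
  have Hn : path_src G e1 es <> path_tgt G e1 es.
    by rewrite Hs1 Ht1 Hy; case: (ord2E s) => ->.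
  have [e He Hae] := @path_cross G e1 es Hp Hn.
  by exists e; [rewrite in_cons He orbT | rewrite Hae Hs1 Ht1].
move: Hy He0 Hae'; case: (ord2E s) => -> /= -> He0 Hae'.
  by exists e0, e'; split; rewrite ?mem_head.
by exists e', e0; split; rewrite ?mem_head.
Qed.

Lemma sumE_cnt (R : realType) (G : multigraph 2) (phi : 'I_2 * 'I_2 -> R) :
  \sum_(e : 'I_(size G)) phi (Defs.arc G e) =
  (cnt G (o0,o0))%:R * phi (o0,o0) + (cnt G (o0,o1))%:R * phi (o0,o1)
     + (cnt G (o1,o0))%:R * phi (o1,o0) + (cnt G (o1,o1))%:R * phi (o1,o1).
Proof. by rewrite -sumG (big_tnth _ _ G). Qed.

Lemma sum_ge1 (R : realType) (I : finType) (P : pred I) (c : I -> R) a :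
  (forall i, 0 <= c i) -> P a -> c a <= \sum_(i | P i) c i.
Proof.
move=> Hc Ha; rewrite (bigD1 a) //= lerDl; apply: sumr_ge0 => i _; exact: Hc.
Qed.

Lemma sum_ge2 (R : realType) (I : finType) (P : pred I) (c : I -> R) a b :
  (forall i, 0 <= c i) -> P a -> P b -> a != b -> c a + c b <= \sum_(i | P i) c i.
Proof.
move=> Hc Ha Hb Hab; rewrite (bigD1 a) //= lerD2l.
apply: sum_ge1 => //=; rewrite Hb eq_sym Hab.
by [].
Qed.

Lemma thr_bound (R : realType) (G : multigraph 2) (t : R) :
  dregular G 3 -> hosts G (t *: M2 R) -> t <= 8 / 9.
Proof.
move=> Hreg [F HF]; have [Hr1 Hr2 Hr3 Hr4] := reg_counts G Hreg.
case Hk: (cnt G (o0,o1)) => [|k].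
  have := @route_bound R 2 G F _ (fun e => if Defs.arc G e == (o0,o1) then 1 else 0)
     (fun u v => if (u,v) == (o0,o1) then 1 else 0) HF.
  rewrite (@sumE_cnt R G (fun p => if p == (o0,o1) then 1 else 0)) Hk !sum2 !mxE /= ?o01 ?o10 ?eqxx /=.
  have Hpath := HF; case: Hpath => Hpath _ _ _.
  move=> H; have := H (fun e => ltac:(by case: ifP)); move=> {}H.
  suff Hpp : forall f, f \in F -> (if (path_src G f.1.1 f.1.2, path_tgt G f.1.1 f.1.2) == (o0, o1)
     then 1 else 0 : R) <= \sum_(e in f.1.1 :: f.1.2) (if Defs.arc G e == (o0, o1) then 1 else 0).
    by have := H Hpp; rewrite cap2; lra.
  move=> f Hf; case: ifP => [/eqP [Hs Ht] | _]; last first.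
    by apply: sumr_ge0 => e _; case: ifP.
  have Hn : path_src G f.1.1 f.1.2 <> path_tgt G f.1.1 f.1.2 by rewrite Hs Ht.
  have [e He Hae] := @path_cross G f.1.1 f.1.2 (Hpath f Hf) Hn.
  apply: le_trans (@sum_ge1 R _ _ (fun e => if Defs.arc G e == (o0,o1) then 1 else 0) e _ He).
    by rewrite Hae Hs Ht eqxx.
  by move=> i; case: ifP.
have R1 : (cnt G (o0,o0))%:R + (cnt G (o0,o1))%:R = 3 :> R by rewrite -natrD Hr1.
have R3 : (cnt G (o0,o0))%:R + (cnt G (o1,o0))%:R = 3 :> R by rewrite -natrD Hr3.
have R4 : (cnt G (o0,o1))%:R + (cnt G (o1,o1))%:R = 3 :> R by rewrite -natrD Hr4.
have Rk : 1 <= (cnt G (o0,o1))%:R :> R by rewrite Hk ler1n.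
have Hc : forall e, 0 <= (if (Defs.arc G e).1 == (Defs.arc G e).2 then 2 else 1 : R).
  by move=> e; case: ifP.
have := @route_bound R 2 G F _ (fun e => if (Defs.arc G e).1 == (Defs.arc G e).2 then 2 else 1)
     (fun u v => if u == v then 2 else 1) HF Hc.
rewrite (@sumE_cnt R G (fun p => if p.1 == p.2 then 2 else 1)) !sum2 !mxE /= ?o01 ?o10 ?eqxx /=.
have Hpath := HF; case: Hpath => Hpath _ _ _.
move=> H.
suff Hpp : forall f, f \in F -> (if path_src G f.1.1 f.1.2 == path_tgt G f.1.1 f.1.2
     then 2 else 1 : R) <= \sum_(e in f.1.1 :: f.1.2)
      (if (Defs.arc G e).1 == (Defs.arc G e).2 then 2 else 1).
  by have := H Hpp; rewrite cap2; lra.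
move=> f Hf; case: (eqVneq (path_src G f.1.1 f.1.2) (path_tgt G f.1.1 f.1.2)) => Hst.
  rewrite ?eqxx.
  case: (@path_loop G f.1.1 f.1.2 (Hpath f Hf) Hst) => [Hl | [e [e' [He He' Ha Ha']]]].
    apply: le_trans (@sum_ge1 R _ _ _ f.1.1 Hc (mem_head _ _)).
    by rewrite Hl eqxx.
  have Hee : e != e' by apply/eqP => Hee; move: Ha; rewrite Hee Ha'.
  apply: le_trans (@sum_ge2 R _ _ _ e e' Hc He He' Hee).
  by rewrite Ha Ha' /= ?o01 ?o10; lra.
rewrite ?(negbTE Hst).
apply: le_trans (@sum_ge1 R _ _ _ f.1.1 Hc (mem_head _ _)).
by case: ifP => _; lra.
Qed.

Lemma row_bound (R : realType) (a b : nat) (x y : R) :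
  (a + b == 3)%N -> x <= 1/2 -> y <= 1/2 -> x <= a%:R / 3 -> y <= b%:R / 3 -> x + y <= 5/6.
Proof.
case: a => [|[|[|[|a]]]]; case: b => [|[|[|[|b]]]] //=; try lra.
all: try (rewrite addnS; by []).
all: try (rewrite addSn; by []).
Qed.

Lemma direct_entry (R : realType) (G : multigraph 2) F (A : 'M[R]_2) p :
  routing_ok G F A -> (forall f, f \in F -> f.1.2 = [::]) ->
  A p.1 p.2 <= (cnt G p)%:R / 3.
Proof.
move=> HF Hd.
have := @route_bound R 2 G F _ (fun e => if Defs.arc G e == p then 1 else 0)
     (fun u v => if (u,v) == p then 1 else 0) HF.
have Hc : forall e, 0 <= (if Defs.arc G e == p then 1 else 0 : R) by move=> e; case: ifP.
move=> /(_ Hc) H.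
have Hpp : forall f, f \in F -> (if (path_src G f.1.1 f.1.2, path_tgt G f.1.1 f.1.2) == p
     then 1 else 0 : R) <= \sum_(e in f.1.1 :: f.1.2) (if Defs.arc G e == p then 1 else 0).
  move=> f Hf; have := Hd f Hf; case: f Hf => [[e0 es] d] Hf /= ->.
  apply: le_trans (@sum_ge1 R _ _ _ e0 Hc (mem_head _ _)).
  by rewrite /path_src /path_tgt /=; case: (Defs.arc G e0).
move: (H Hpp); rewrite (@sumE_cnt R G (fun q => if q == p then 1 else 0)) !sum2 cap2.
case: (pair2E p) => -> /=; rewrite ?o01 ?o10 ?eqxx /=; lra.
Qed.

Lemma zero_direct (R : realType) (G : multigraph 2) : directly_hosts G (0 : 'M[R]_2).
Proof.
exists [::]; split => //; split => //.
  by move=> u v; rewrite big_nil mxE.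
by move=> e; rewrite big_nil cap2; lra.
Qed.

Lemma wdt_M1 (R : realType) (G : multigraph 2) :
  dregular G 3 -> weak_direct_throughput G (M1 R) <= 5/6.
Proof.
move=> Hreg; have [Hr1 Hr2 Hr3 Hr4] := reg_counts G Hreg.
rewrite /weak_direct_throughput; apply: ge_sup.
  exists 0, 0; split; first by move=> i j; rewrite !mxE; apply/andP; split; lra.
  split; last exact: zero_direct.
  by rewrite !sum2 !mxE; lra.
move=> eta [M' [Hb [Hs [F [HF Hd]]]]].
have E p : M' p.1 p.2 <= (cnt G p)%:R / 3 by exact: direct_entry HF Hd.
have B i j : M' i j <= 1/2 by have /andP[_] := Hb i j; rewrite mxE.
have X0 := @row_bound R _ _ _ _ (introT eqP Hr1) (B o0 o0) (B o0 o1) (E (o0,o0)) (E (o0,o1)).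
have X1 := @row_bound R _ _ _ _ (introT eqP Hr2) (B o1 o0) (B o1 o1) (E (o1,o0)) (E (o1,o1)).
move: Hs; rewrite !sum2 /=; lra.
Qed.

Definition G1 : multigraph 2 := [:: (o0,o0); (o1,o1); (o0,o1); (o0,o1); (o1,o0); (o1,o0)].
Definition a1 (k : nat) (H : (k < 6)%N) : 'I_(size G1) := @Ordinal (size G1) k H.

Definition F1 (R : realType) : seq (('I_(size G1) * seq 'I_(size G1)) * R) :=
  [:: ((a1 0 isT, [::]), 1/3); ((a1 1 isT, [::]), 1/3);
      ((a1 2 isT, [:: a1 4 isT]), 1/9); ((a1 5 isT, [:: a1 3 isT]), 1/9);
      ((a1 2 isT, [::]), 2/9); ((a1 3 isT, [::]), 2/9);
      ((a1 4 isT, [::]), 2/9); ((a1 5 isT, [::]), 2/9)].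

Lemma G1_reg : dregular G1 3.
Proof. by move=> v; case: (ord2E v) => ->. Qed.

Lemma F1_ok (R : realType) : routing_ok G1 (F1 R) ((8/9) *: M1 R).
Proof.
split.
- by apply/allP.
- move=> f; rewrite /F1.
  by do 8 (case/predU1P => [-> /=|]; first lra).
- move=> u v; case: (ord2E u) => ->; case: (ord2E v) => ->;
  by rewrite !big_cons big_nil /= !mxE; lra.
- case=> [[|[|[|[|[|[|k]]]]]] Hk]; rewrite ?cap2; try (by []);
  rewrite !big_cons big_nil /= ?inE /=; lra.
Qed.

Lemma hosts_ub_M1 (R : realType) (t : R) : hosts G1 (t *: M1 R) -> t <= 1.
Proof.
move=> [F HF].
have Hc : forall e : 'I_(size G1), 0 <= (1 : R) by move=> _; lra.
have Hpp : forall f, f \in F -> (1 : R) <= \sum_(e in f.1.1 :: f.1.2) 1.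
  by move=> f _; apply: (@sum_ge1 R _ _ (fun _ => 1) f.1.1 Hc (mem_head _ _)).
have := @route_bound R 2 G1 F _ (fun _ => 1) (fun _ _ => 1) HF Hc Hpp.
rewrite sumr_const card_ord !sum2 !mxE cap2 /= => H; clear Hc Hpp HF F; lra.
Qed.

Lemma part1a (R : realType) : exists G : multigraph 2, dregular G 3 /\ 8 / 9 <= throughput G (M1 R).
Proof.
exists G1; split; first exact: G1_reg.
rewrite /throughput; apply: sup_upper_bound; last by exists (F1 R); exact: F1_ok.
split; first by exists (8/9); exists (F1 R); exact: F1_ok.
by exists 1 => t; exact: hosts_ub_M1.
Qed.

Definition G0 : multigraph 2 := [:: (o0,o0); (o0,o0); (o0,o0); (o1,o1); (o1,o1); (o1,o1)].
Definition b0 (k : nat) (H : (k < 6)%N) : 'I_(size G0) := @Ordinal (size G0) k H.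
Definition F0 (R : realType) : seq (('I_(size G0) * seq 'I_(size G0)) * R) :=
  [:: ((b0 0 isT, [::]), 3/10); ((b0 1 isT, [::]), 3/10); ((b0 2 isT, [::]), 3/10);
      ((b0 3 isT, [::]), 3/10); ((b0 4 isT, [::]), 3/10); ((b0 5 isT, [::]), 3/10)].
Definition D0 (R : realType) : 'M[R]_2 := \matrix_(i, j) (if i == j then 9/10 else 0).

Lemma G0_reg : dregular G0 3.
Proof. by move=> v; case: (ord2E v) => ->. Qed.

Lemma F0_ok (R : realType) : routing_ok G0 (F0 R) (D0 R).
Proof.
split.
- by apply/allP.
- move=> f; rewrite /F0.
  by do 6 (case/predU1P => [-> /=|]; first lra).
- move=> u v; case: (ord2E u) => ->; case: (ord2E v) => ->;
  by rewrite !big_cons big_nil /= !mxE /=; lra.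
- case=> [[|[|[|[|[|[|k]]]]]] Hk]; rewrite ?cap2; try (by []);
  rewrite !big_cons big_nil /= ?inE /=; lra.
Qed.

Lemma part2a (R : realType) :
  exists G : multigraph 2, dregular G 3 /\ 9 / 10 <= weak_direct_throughput G (M2 R).
Proof.
exists G0; split; first exact: G0_reg.
have Hin : [set eta : R | exists M' : 'M[R]_2,
         (forall i j, 0 <= M' i j <= M2 R i j) /\
         \sum_(i < 2) \sum_(j < 2) M' i j = eta * 2%:R /\
         directly_hosts G0 M']%classic (9/10).
  exists (D0 R); split.
    move=> i j; rewrite !mxE; case: (i == j); apply/andP; split; lra.
  split; first by rewrite !sum2 !mxE /=; lra.
  exists (F0 R); split; first exact: F0_ok.
  by move=> f; rewrite /F0; do 6 (case/predU1P => [-> //|]).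
rewrite /weak_direct_throughput; apply: sup_upper_bound; last exact: Hin.
split; first by exists (9/10).
exists 1 => eta [M' [Hb [Hs _]]].
have B i j : M' i j <= M2 R i j by have /andP[_] := Hb i j.
have B00 := B o0 o0; have B01 := B o0 o1; have B10 := B o1 o0; have B11 := B o1 o1.
move: Hs B00 B01 B10 B11; rewrite !sum2 !mxE /= ?o01 ?o10 ?eqxx /=.
move=> Hs B00 B01 B10 B11; clear Hb B; lra.
Qed.

Lemma part2b (R : realType) (G : multigraph 2) :
  dregular G 3 -> throughput G (M2 R) < 9 / 10.
Proof.
move=> Hreg; apply: (@le_lt_trans _ _ (8/9)); last lra.
rewrite /throughput; apply: ge_sup.
  exists 0; exists [::]; split => //.
    by move=> u v; rewrite big_nil !mxE mul0r.
  by move=> e; rewrite big_nil cap2; lra.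
by move=> t Ht; exact: thr_bound Hreg Ht.
Qed.

Theorem mainTheorem4 (R : realType) :
  ((exists G : multigraph 2, dregular G 3 /\ 8 / 9 <= throughput G (M1 R)) /\
   (forall G : multigraph 2, dregular G 3 -> weak_direct_throughput G (M1 R) <= 5 / 6)) /\
  ((exists G : multigraph 2, dregular G 3 /\ 9 / 10 <= weak_direct_throughput G (M2 R)) /\
   (forall G : multigraph 2, dregular G 3 -> throughput G (M2 R) < 9 / 10)).
Proof.
split; split.
- exact: part1a.
- by move=> G; exact: wdt_M1.
- exact: part2a.
- by move=> G; exact: part2b.
Qed.
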